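(* For every $f\in\mathcal H^\infty_w$ one has $G_{\tilde\psi,\psi}C_{\tilde\psi}f=C_{\tilde\psi}f$, i.e. $\sum_{l\in X}\langle\psi_l,\tilde\psi_k\rangle\,\langle f,\tilde\psi_l\rangle_{\overline{\mathcal H},\mathcal H^{00}}=\langle f,\tilde\psi_k\rangle_{\overline{\mathcal H},\mathcal H^{00}}$ for all $k\in X$. In other words, $G_{\tilde\psi,\psi}$ restricted to the range $R(C_{\tilde\psi})$ is the identity of $R(C_{\tilde\psi})$.
   Context: Standing setting. $\mathcal H$ is a separable complex Hilbert space with inner product $\langle\cdot,\cdot\rangle$, linear in the first and conjugate-linear in the second argument. $X$ is a countable index set. A weight is a map $w:X\to(0,\infty)$; $\ell^\infty_w$ is the Banach space of sequences $\alpha=(\alpha_k)_{k\in X}$ with $\|\alpha\|_{\ell^\infty_w}:=\sup_{k\in X}|\alpha_k|w(k)<\infty$. $\psi=(\psi_k)_{k\in X}$ is a frame for $\mathcal H$ and $\tilde\psi=(\tilde\psi_k)_{k\in X}$ is a dual frame, i.e. $f=\sum_{k}\langle f,\tilde\psi_k\rangle\psi_k=\sum_k\langle f,\psi_k\rangle\tilde\psi_k$ for all $f\in\mathcal H$ (unconditional convergence in $\mathcal H$). The cross Gram matrix $G_{\tilde\psi,\psi}$ has entries $(G_{\tilde\psi,\psi})_{k,l}=\langle\psi_l,\tilde\psi_k\rangle$ and acts by $(G_{\tilde\psi,\psi}\alpha)_k=\sum_{l\in X}\langle\psi_l,\tilde\psi_k\rangle\alpha_l$; it is assumed to define a bounded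 operator on $\ell^\infty_w$, meaning these series converge absolutely for every $\alpha\in\ell^\infty_w$ and $G_{\tilde\psi,\psi}:\ell^\infty_w\to\ell^\infty_w$ is bounded (equivalently $\|G_{\tilde\psi,\psi}\|_{\mathcal B(\ell^\infty_w)}=\sup_{k}\sum_{l}|\langle\psi_l,\tilde\psi_k\rangle|\,w(k)/w(l)<\infty$). Let $\mathcal H^{00}:=\operatorname{span}\{\tilde\psi_k:k\in X\}$ (finite linear combinations), a dense subspace of $\mathcal H$. Equip $\mathcal H$ with the locally convex topology $\sigma(\mathcal H,\mathcal H^{00})$ generated by the seminorms $f\mapsto|\langle f,v\rangle|$, $v\in\mathcal H^{00}$ (Hausdorff and metrizable). Let $\overline{\mathcal H}$ be the completion of $\mathcal H$ in this topology, with $\mathcal H\subseteq\overline{\mathcal H}$, and for each $v\in\mathcal H^{00}$ let $f\mapsto\langle f,v\rangle_{\overline{\mathcal H},\mathcal H^{00}}$ be the unique continuous linear extension of $f\mapsto\langle f,v\rangle$ to $\overline{\mathcal H}$. Define $\mathcal H^\infty_w$ as the set of all $f\in\overline{\mathcal H}$ for which there is a sequence $(f_n)_{n\ge1}\subseteq\mathcal H$ converging to $f$ in $\sigma(\overline{\mathcal H},\mathcal H^{00})$ (i.e. $\langle f_n,v\rangle\to\langle f,v\rangle_{\overline{\mathcal H},\mathcal H^{00}}$ for all $v\in\mathcal H^{00}$) with $\sup_{n\in\mathbb N,k\in X}|\langle f_n,\tilde\psi_k\rangle|w(k)<\infty$. The coefficient operator is $C_{\tilde\psi}:\mathcal H^\infty_w\to\ell^\infty_w$,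 $C_{\tilde\psi}f=(\langle f,\tilde\psi_k\rangle_{\overline{\mathcal H},\mathcal H^{00}})_{k\in X}$, and $R(C_{\tilde\psi})$ denotes its range. *)

(* Defs.v *)
From mathcomp Require Import all_boot all_order all_algebra.
From mathcomp Require Import reals.
From mathcomp.real_closed Require Import complex.
Set Implicit Arguments. Unset Strict Implicit. Unset Printing Implicit Defensive.
Import Order.TTheory GRing.Theory Num.Theory.
Local Open Scope ring_scope.

Section FrameDefs.
Variable R : realType.
Local Notation C := R[i].

Definition cabs (z : C) : R := Num.sqrt (complex.Re z ^+ 2 + complex.Im z ^+ 2).

Definition cvgC (u : nat -> C) (l : C) : Prop :=
  forall e : R, 0 < e -> exists N : nat, forall n, (N <= n)%N -> cabs (u n - l) < e.
Definition cauchyC (u : nat -> C) : Prop :=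
  forall e : R, 0 < e -> exists N : nat, forall m n, (N <= m)%N -> (N <= n)%N ->
    cabs (u m - u n) < e.

Variable X : countType.

(* unconditional summation over the countable index set X: convergence of the
   net of finite partial sums (finite subsets given as duplicate-free lists) *)
Definition hasSumC (a : X -> C) (s : C) : Prop :=
  forall e : R, 0 < e -> exists F0 : seq X, forall F : seq X, uniq F ->
    {subset F0 <= F} -> cabs (s - \sum_(k <- F) a k) < e.
Definition hasSumR (a : X -> R) (s : R) : Prop :=
  forall e : R, 0 < e -> exists F0 : seq X, forall F : seq X, uniq F ->
    {subset F0 <= F} -> `|s - \sum_(k <- F) a k| < e.
Definition abs_summable (a : X -> C) : Prop :=
  exists M : R, forall F : seq X, uniq F -> \sum_(k <- F) cabs (a k) <= M.

Definition in_linfw (w : X -> R) (al : X -> C) : Prop :=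
  exists M : R, forall k, cabs (al k) * w k <= M.

Variable H : lmodType C.
Variable ip : H -> H -> C.   (* inner product, linear in the first argument *)

Definition nsq (f : H) : R := complex.Re (ip f f).
Definition hnorm (f : H) : R := Num.sqrt (nsq f).

Record inner_product : Prop := {
  ip_linl : forall (a : C) (f g h : H), ip (a *: f + g) h = a * ip f h + ip g h;
  ip_csym : forall f g : H, ip f g = (ip g f)^*;
  ip_pos  : forall f : H, 0 <= ip f f;
  ip_def  : forall f : H, ip f f = 0 -> f = 0 }.

Definition cvgH (u : nat -> H) (l : H) : Prop :=
  forall e : R, 0 < e -> exists N : nat, forall n, (N <= n)%N -> hnorm (u n - l) < e.
Definition cauchyH (u : nat -> H) : Prop :=
  forall e : R, 0 < e -> exists N : nat, forall m n, (N <= m)%N -> (N <= n)%N ->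
    hnorm (u m - u n) < e.

Definition hilbert_space : Prop :=
  [/\ inner_product,
      (forall u : nat -> H, cauchyH u -> exists l, cvgH u l) &
      (exists d : nat -> H, forall (f : H) (e : R), 0 < e -> exists n, hnorm (f - d n) < e)].

Definition hasSumH (a : X -> H) (s : H) : Prop :=
  forall e : R, 0 < e -> exists F0 : seq X, forall F : seq X, uniq F ->
    {subset F0 <= F} -> hnorm (s - \sum_(k <- F) a k) < e.

Definition is_frame (psi : X -> H) : Prop :=
  exists A B : R, 0 < A /\ 0 < B /\
    forall f : H, exists s : R,
      hasSumR (fun k => cabs (ip f (psi k)) ^+ 2) s /\ A * nsq f <= s /\ s <= B * nsq f.

Definition dual_frame (psi psit : X -> H) : Prop :=
  [/\ is_frame psi, is_frame psit &
      forall f : H, hasSumH (fun k => ip f (psit k) *: psi k) f /\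
                    hasSumH (fun k => ip f (psi k) *: psit k) f].

(* cross Gram matrix (G_{psit,psi})_{k,l} = <psi_l, psit_k> *)
Definition gram (psi psit : X -> H) (k l : X) : C := ip (psi l) (psit k).

Definition gram_bounded_linfw (psi psit : X -> H) (w : X -> R) : Prop :=
  (forall al, in_linfw w al -> forall k, abs_summable (fun l => gram psi psit k l * al l)) /\
  exists M : R, forall (al : X -> C) (c : R), (forall k, cabs (al k) * w k <= c) ->
    forall k s, hasSumC (fun l => gram psi psit k l * al l) s -> cabs s * w k <= M * c.

Definition inH00 (psit : X -> H) (v : H) : Prop :=
  exists s : seq (C * X), v = \sum_(p <- s) p.1 *: psit p.2.

(* (Hb, iota, pb) is a completion of H for sigma(H, H^00): Hb carries the
   topology generated by the seminorms x |-> |pb x v|, v in H^00, pb x v being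
   the continuous linear extension <x, v>_{Hb,H^00}; iota : H -> Hb is the
   inclusion. The space is metrizable, so sequential notions suffice. *)
Record sigma_completion (psit : X -> H) (Hb : lmodType C) (iota : H -> Hb)
    (pb : Hb -> H -> C) : Prop := {
  sc_iota_lin : forall (a : C) (f g : H), iota (a *: f + g) = a *: iota f + iota g;
  sc_pb_lin : forall (a : C) (x y : Hb) v, inH00 psit v ->
     pb (a *: x + y) v = a * pb x v + pb y v;
  sc_compat : forall (f : H) v, inH00 psit v -> pb (iota f) v = ip f v;
  sc_hausdorff : forall x y : Hb, (forall v, inH00 psit v -> pb x v = pb y v) -> x = y;
  sc_complete : forall u : nat -> Hb, (forall v, inH00 psit v -> cauchyC (fun n => pb (u n) v)) ->
     exists x : Hb, forall v, inH00 psit v -> cvgC (fun n => pb (u n) v) (pb x v);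
  sc_dense : forall x : Hb, exists u : nat -> H,
     forall v, inH00 psit v -> cvgC (fun n => pb (iota (u n)) v) (pb x v) }.

Definition in_Hinfw (psit : X -> H) (w : X -> R) (Hb : lmodType C) (iota : H -> Hb)
    (pb : Hb -> H -> C) (f : Hb) : Prop :=
  exists u : nat -> H,
    (forall v, inH00 psit v -> cvgC (fun n => ip (u n) v) (pb f v)) /\
    exists M : R, forall n k, cabs (ip (u n) (psit k)) * w k <= M.

Definition coef_op (psit : X -> H) (Hb : lmodType C) (pb : Hb -> H -> C) (f : Hb) : X -> C :=
  fun k => pb f (psit k).

End FrameDefs.

(* Main.v *)
Require Import Defs.
From mathcomp Require Import all_boot all_order all_algebra.
From mathcomp Require Import classical_sets reals.
From mathcomp Require Import lra ring.
From mathcomp.real_closed Require Import complex.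
Import Order.TTheory GRing.Theory Num.Theory.
Local Open Scope complex_scope.
Local Open Scope ring_scope.

Section Cabs.
Variable R : realType.
Implicit Types x y : R[i].

Lemma cabsE x : (cabs x)%:C = `|x|.
Proof. by rewrite normc_def. Qed.

Lemma cabs_ge0 x : 0 <= cabs x.
Proof. by rewrite -ler0c cabsE. Qed.

Lemma cabsD x y : cabs (x + y) <= cabs x + cabs y.
Proof. by rewrite -lecR rmorphD /= !cabsE ler_normD. Qed.

Lemma cabsM x y : cabs (x * y) = cabs x * cabs y.
Proof. by apply: complexI; rewrite rmorphM /= !cabsE normrM. Qed.

Lemma cabsN x : cabs (- x) = cabs x.
Proof. by apply: complexI; rewrite !cabsE normrN. Qed.

Lemma cabsB x y : cabs (x - y) = cabs (y - x).
Proof. by rewrite -cabsN opprB. Qed.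

Lemma cabs0 : cabs (0 : R[i]) = 0.
Proof. by apply: complexI; rewrite cabsE normr0. Qed.

Lemma cabsR (r : R) : cabs r%:C = `|r|.
Proof.
apply: complexI; rewrite cabsE.
have [r0|r0] := lerP 0 r.
  by rewrite !ger0_norm ?ler0c.
rewrite !ltr0_norm ?rmorphN //. by rewrite ltcR.
Qed.

Lemma cabs_sum (I : Type) (s : seq I) (F : I -> R[i]) :
  cabs (\sum_(i <- s) F i) <= \sum_(i <- s) cabs (F i).
Proof.
elim: s => [|a s IH]; first by rewrite !big_nil cabs0.
rewrite !big_cons; apply: le_trans (cabsD _ _) _; exact: lerD.
Qed.

Lemma cabs_eq0 x : cabs x = 0 -> x = 0.
Proof. by move=> h; apply/eqP; rewrite -normr_eq0 -cabsE h. Qed.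
End Cabs.

Section Hil.
Variables (R : realType) (X : countType) (H : lmodType R[i]) (ip : H -> H -> R[i]).
Hypothesis Hip : inner_product ip.

Lemma ip0l h : ip 0 h = 0.
Proof.
have := ip_linl Hip 1 0 0 h; rewrite scaler0 addr0 mul1r.
by rewrite -{1}[ip 0 h]addr0 => /addrI <-.
Qed.

Lemma ipDl f g h : ip (f + g) h = ip f h + ip g h.
Proof. by have := ip_linl Hip 1 f g h; rewrite scale1r mul1r. Qed.

Lemma ipZl a f h : ip (a *: f) h = a * ip f h.
Proof. by have := ip_linl Hip a f 0 h; rewrite addr0 ip0l addr0. Qed.

Lemma ipNl f h : ip (- f) h = - ip f h.
Proof. by rewrite -scaleN1r ipZl mulN1r. Qed.

Lemma ipBl f g h : ip (f - g) h = ip f h - ip g h.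
Proof. by rewrite ipDl ipNl. Qed.

Lemma ip_suml (I : Type) (s : seq I) (c : I -> R[i]) (p : I -> H) h :
  ip (\sum_(i <- s) c i *: p i) h = \sum_(i <- s) c i * ip (p i) h.
Proof.
elim: s => [|a s IH]; first by rewrite !big_nil ip0l.
by rewrite !big_cons ipDl ipZl IH.
Qed.

Lemma nsq_ge0 f : 0 <= nsq ip f.
Proof. by have := ip_pos Hip f; rewrite lecE => /andP[_]. Qed.

Lemma nsqE f : nsq ip f = hnorm ip f ^+ 2.
Proof. by rewrite /hnorm sqr_sqrtr // nsq_ge0. Qed.

Lemma hasSumR_term (a : X -> R) s k : (forall l, 0 <= a l) -> hasSumR a s -> a k <= s.
Proof.
move=> a0 hs; apply/ler_addgt0Pr => e e0.
have [F0 hF0] := hs e e0.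
set F := undup (k :: F0).
have uF : uniq F by exact: undup_uniq.
have sF : {subset F0 <= F} by move=> x xF; rewrite mem_undup inE xF orbT.
have := hF0 F uF sF.
have kF : k \in F by rewrite mem_undup inE eqxx.
rewrite (bigD1_seq k kF uF) /=.
have : 0 <= \sum_(i <- F | i != k) a i by apply: sumr_ge0.
move=> h1 h2; have := ler_norm ((a k + \sum_(i <- F | i != k) a i) - s).
rewrite distrC. lra.
Qed.

Lemma frame_bound (psit : X -> H) : is_frame ip psit ->
  exists B : R, 0 < B /\ forall g k, cabs (ip g (psit k)) ^+ 2 <= B * nsq ip g.
Proof.
move=> [A [B [A0 [B0 hf]]]]; exists B; split => // g k.
have [s [hs [_ sB]]] := hf g.
apply: le_trans sB; apply: (@hasSumR_term (fun k => cabs (ip g (psit k)) ^+ 2)) => //.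
by move=> l; apply: sqr_ge0.
Qed.

Lemma expansion (psi psit : X -> H) : dual_frame ip psi psit ->
  forall u k, hasSumC (fun l => gram ip psi psit k l * ip u (psit l)) (ip u (psit k)).
Proof.
move=> [_ fr hdual] u k e e0.
have [B [B0 hB]] := @frame_bound psit fr.
have e'0 : 0 < e / (B + 1) by apply: divr_gt0 => //; lra.
have [F0 hF0] := (hdual u).1 _ e'0.
exists F0 => F uF sF.
have := hF0 F uF sF.
set S := \sum_(k <- F) _.
have hip : ip (u - S) (psit k) = ip u (psit k) - \sum_(l <- F) gram ip psi psit k l * ip u (psit l).
  rewrite ipBl /S ip_suml; congr (_ - _); apply: eq_bigr => l _; by rewrite mulrC.
rewrite -hip => hn.
have := hB (u - S) k; rewrite nsqE.
set c := cabs _; set h := hnorm _ _.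
have c0 : 0 <= c by apply: cabs_ge0.
have h0 : 0 <= h by apply: sqrtr_ge0.
move=> hc.
have eq1 : e / (B + 1) * (B + 1) = e by rewrite divfK //; apply: lt0r_neq0; lra.
have : h * (B + 1) < e by rewrite -eq1 ltr_pM2r //; lra.
move=> hb.
rewrite ltNge; apply/negP => ce.
have : e ^+ 2 <= c ^+ 2 by rewrite lerXn2r // ?nnegrE //; lra.
have : (h * (B + 1)) ^+ 2 < e ^+ 2.
  rewrite ltrXn2r // ?nnegrE //; try lra; try nra.
have : B * h ^+ 2 <= (h * (B + 1)) ^+ 2.
  rewrite exprMn; have := sqr_ge0 h; nra.
lra.
Qed.
End Hil.

Section Dom.
Variables (R : realType) (X : countType).
Local Notation C := R[i].

Lemma sum_le_const (s : seq X) (F : X -> R) c :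
  (forall i, i \in s -> F i <= c) -> \sum_(i <- s) F i <= c * (size s)%:R.
Proof.
elim: s => [|a s IH] h; first by rewrite big_nil mulr0.
rewrite big_cons /= -addn1 natrD mulrDr mulr1 addrC lerD //.
  by apply: IH => i iS; apply: h; rewrite inE iS orbT.
by apply: h; rewrite inE eqxx.
Qed.

Lemma tail_small (D : X -> R) K :
  (forall l, 0 <= D l) -> (forall F, uniq F -> \sum_(l <- F) D l <= K) ->
  forall e, 0 < e -> exists F1 : seq X, forall G, uniq G -> (forall x, x \in G -> x \notin F1) ->
    \sum_(l <- G) D l < e.
Proof.
move=> D0 hK e e0.
pose E : set R := fun r => exists F : seq X, uniq F /\ r = \sum_(l <- F) D l.
have hE : has_sup E.
  split; first by exists 0; exists [::]; rewrite big_nil.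
  by exists K => x [F [uF ->]]; apply: hK.
have [r [F1 [uF1 ->]] hr] := sup_adherent e0 hE.
exists F1 => G uG dG.
have uFG : uniq (F1 ++ G).
  rewrite cat_uniq uF1 uG andbT /=; apply/hasPn => x xG; exact: dG.
have : \sum_(l <- F1 ++ G) D l <= sup E.
  by apply: sup_upper_bound => //; exists (F1 ++ G).
rewrite big_cat /=. lra.
Qed.

Lemma cvg_fin (b_ : nat -> X -> C) (b : X -> C) (F : seq X) d : 0 < d ->
  (forall l, cvgC (fun n => b_ n l) (b l)) ->
  exists N, forall n, (N <= n)%N -> forall l, l \in F -> cabs (b_ n l - b l) < d.
Proof.
move=> d0 hc; elim: F => [|a F [N hN]]; first by exists 0%N.
have [M hM] := hc a d d0.
exists (maxn N M) => n hn l; rewrite inE => /orP[/eqP ->|lF].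
  by apply: hM; apply: leq_trans hn; apply: leq_maxr.
by apply: hN => //; apply: leq_trans hn; apply: leq_maxl.
Qed.

Lemma dom_conv (a_ : nat -> X -> C) (a : X -> C) (L_ : nat -> C) (L : C) (D : X -> R) K :
  (forall n, hasSumC (a_ n) (L_ n)) ->
  cvgC L_ L ->
  (forall l, cvgC (fun n => a_ n l) (a l)) ->
  (forall n l, cabs (a_ n l) <= D l) ->
  (forall F, uniq F -> \sum_(l <- F) D l <= K) ->
  hasSumC a L.
Proof.
move=> hs hL ha hD hK e e0.
have D0 : forall l, 0 <= D l by move=> l; apply: le_trans (hD 0%N l); apply: cabs_ge0.
have e40 : 0 < e / 4 by apply: divr_gt0.
have [F1 hF1] := @tail_small D K D0 hK _ e40.
exists F1 => F uF sF.
pose d := e / 4 / ((size F)%:R + 1).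
have d0 : 0 < d by apply: divr_gt0 => //; apply: ltr_wpDl; [apply: ler0n| apply: ltr01].
have [N1 hN1] := @cvg_fin a_ a F d d0 ha.
have [N2 hN2] := hL _ e40.
pose n := maxn N1 N2.
have [F0 hF0] := hs n _ e40.
pose G := undup (filter (fun x => x \notin F) F0).
have uFG : uniq (F ++ G).
  rewrite cat_uniq uF undup_uniq andbT /=; apply/hasPn => x.
  by rewrite mem_undup mem_filter => /andP[].
have sFG : {subset F0 <= F ++ G}.
  move=> x xF0; rewrite mem_cat; case: (boolP (x \in F)) => //= xF.
  by rewrite mem_undup mem_filter xF xF0.
have h1 := hF0 _ uFG sFG; rewrite big_cat /= in h1.
have h2 : cabs (\sum_(l <- G) a_ n l) < e / 4.
  apply: (le_lt_trans (@cabs_sum _ _ G (a_ n))); apply: le_lt_trans (hF1 G (undup_uniq _) _).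
    by apply: ler_sum => l _; apply: hD.
  move=> x; rewrite mem_undup mem_filter => /andP[xF _]; apply: contra xF; exact: sF.
have h3 : cabs (L_ n - L) < e / 4 by apply: hN2; apply: leq_maxr.
have h4 : cabs (\sum_(l <- F) a_ n l - \sum_(l <- F) a l) <= d * (size F)%:R.
  rewrite -sumrB; apply: le_trans (@cabs_sum _ _ _ _) _; apply: sum_le_const => l lF.
  by apply/ltW/hN1 => //; apply: leq_maxl.
have h5 : d * (size F)%:R < e / 4.
  have sp : 0 < (size F)%:R + 1 :> R by apply: ltr_wpDl; [apply: ler0n| apply: ltr01].
  rewrite /d -mulrA gtr_pMr // mulrC ltr_pdivrMr // mul1r. lra.
have -> : L - \sum_(k <- F) a k = (L - L_ n) + (L_ n - (\sum_(l <- F) a_ n l + \sum_(l <- G) a_ n l))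
   + \sum_(l <- G) a_ n l + (\sum_(l <- F) a_ n l - \sum_(l <- F) a l).
  by ring.
rewrite cabsB in h3.
set t1 := L - L_ n; set t2 := L_ n - _; set t3 := \sum_(l <- G) _; set t4 := _ - _.
have := @cabsD _ (t1 + t2 + t3) t4; have := @cabsD _ (t1 + t2) t3; have := @cabsD _ t1 t2.
lra.
Qed.
End Dom.

Lemma cvgC_mull (R : realType) (u : nat -> R[i]) l c : cvgC u l -> cvgC (fun n => c * u n) (c * l).
Proof.
move=> hu e e0.
have c0 := @cabs_ge0 _ c.
have e'0 : 0 < e / (cabs c + 1) by apply: divr_gt0 => //; lra.
have [N hN] := hu _ e'0; exists N => n hn.
rewrite -mulrBr cabsM.
have := hN n hn; set x := cabs _ => hx.
have x0 : 0 <= x by apply: cabs_ge0.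
have : x * (cabs c + 1) < e by rewrite -ltr_pdivlMr //; lra.
nra.
Qed.

Theorem mainTheorem7 (R : realType) (X : countType) (H : lmodType R[i])
  (ip : H -> H -> R[i]) (psi psit : X -> H) (w : X -> R)
  (Hb : lmodType R[i]) (iota : H -> Hb) (pb : Hb -> H -> R[i]) :
  hilbert_space ip ->
  (forall k, 0 < w k) ->
  dual_frame ip psi psit ->
  gram_bounded_linfw ip psi psit w ->
  sigma_completion ip psit iota pb ->
  forall f : Hb, in_Hinfw ip psit w iota pb f ->
  forall k : X,
    hasSumC (fun l => gram ip psi psit k l * coef_op psit pb f l) (coef_op psit pb f k).
Proof.
move=> [Hip _ _] w0 hdual [gb1 _] sc f [u [hu [M hM]]] k.
pose al : X -> R[i] := fun l => ((w l)^-1)%:C.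
have cal : forall l, cabs (al l) = (w l)^-1.
  by move=> l; rewrite cabsR ger0_norm // invr_ge0 ltW.
have lal : in_linfw w al.
  by exists 1 => l; rewrite cal mulVf // gt_eqF.
have [K0 hK0] := gb1 al lal k.
have M0 : 0 <= M by apply: le_trans (hM 0%N k); apply: mulr_ge0; [apply: cabs_ge0|apply: ltW].
have inpsit : forall l, inH00 psit (psit l).
  by move=> l; exists [:: (1, l)]; rewrite big_cons big_nil scale1r addr0.
apply: (@dom_conv R X (fun n l => gram ip psi psit k l * ip (u n) (psit l)) _
   (fun n => ip (u n) (psit k)) _ (fun l => M * cabs (gram ip psi psit k l * al l)) (M * K0)).
- by move=> n; apply: expansion.
- exact: hu.
- by move=> l; apply: cvgC_mull; apply: hu.
- move=> n l; rewrite !cabsM cal mulrCA; apply: ler_wpM2l; first exact: cabs_ge0.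
  by rewrite ler_pdivlMr //; apply: hM.
- move=> F uF; rewrite -mulr_sumr; apply: ler_wpM2l => //; exact: hK0.
Qed.
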